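(* Let $X\in\mathbb{C}$ be an imaginary quadratic algebraic number such that $X$ is an $\mathbb{S}[\pm1]$-generator of the subring $\mathbb{Z}[X]\subset\mathbb{C}$, i.e. every element of $\mathbb{Z}[X]$ can be written uniquely as a finite sum $\sum_j\alpha_jX^j$ with $\alpha_j\in\{-1,0,1\}$. Then $\mathbb{Q}(X)$ is one of $\mathbb{Q}(\sqrt{-2})$, $\mathbb{Q}(\sqrt{-3})$, $\mathbb{Q}(\sqrt{-11})$. Moreover all three occur: $1+\sqrt{-2}$ is an $\mathbb{S}[\pm1]$-generator of $\mathbb{Z}[\sqrt{-2}]$ (the ring of integers of $\mathbb{Q}(\sqrt{-2})$), $\sqrt{-3}$ is an $\mathbb{S}[\pm1]$-generator of $\mathbb{Z}[\sqrt{-3}]$, and $\frac12(1+\sqrt{-11})$ is an $\mathbb{S}[\pm1]$-generator of the ring of integers of $\mathbb{Q}(\sqrt{-11})$.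
   Context: $\mathbb{S}[\pm1]=\mathbb{S}[\mu_{2,+}]$ with $\mu_2=\{\pm1\}$; an $\mathbb{S}[\pm1]$-generator of a ring $A\supset\{\pm1\}$ is $X\in A$ such that each element of $A$ is uniquely a finite sum $\sum_j\alpha_jX^j$, $\alpha_j\in\{-1,0,1\}$. *)

(* Defs.v *)
From HB Require Import structures.
From mathcomp Require Import all_boot all_order all_algebra all_field.
Set Implicit Arguments. Unset Strict Implicit. Unset Printing Implicit Defensive.
Import Order.TTheory GRing.Theory Num.Theory.
Local Open Scope ring_scope.

(* Complex numbers: algC (algebraic closure of Q, which contains all
   algebraic complex numbers). *)

Definition zev (p : {poly int}) (x : algC) : algC := (map_poly intr p).[x].

Definition Zadj (x : algC) (z : algC) : Prop := exists p : {poly int}, z = zev p x.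

Definition Qadj (x : algC) (z : algC) : Prop :=
  exists p q : {poly rat}, (map_poly ratr q).[x] != 0 /\
    z = (map_poly ratr p).[x] / (map_poly ratr q).[x].

(* finite sums sum_j a_j x^j with a_j in {-1,0,1} = evaluations of
   integer polynomials with coefficients in {-1,0,1} *)
Definition pm1_poly (p : {poly int}) : bool := all (fun c => c \in [:: -1; 0; 1]) p.

Definition Spm1_generator (A : algC -> Prop) (X : algC) : Prop :=
  A X /\ forall z, A z -> exists! p : {poly int}, pm1_poly p /\ z = zev p X.

Definition imag_quadratic (X : algC) : Prop :=
  X \isn't Num.real /\ exists a b : rat, X ^+ 2 + ratr a * X + ratr b = 0.

Definition same_field (x y : algC) : Prop := forall z, Qadj x z <-> Qadj y z.

Definition ring_of_integers (x : algC) (z : algC) : Prop := Qadj x z /\ z \in Aint.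

(* Main.v *)
Require Import Defs.
From HB Require Import structures.
From mathcomp Require Import all_boot all_order all_algebra all_field.
Import Order.TTheory GRing.Theory Num.Theory.
Local Open Scope ring_scope.
Set Warnings "-notation-overridden,-ambiguous-paths".
From mathcomp Require Import ring lra zify.
Import Order.TTheory GRing.Theory Num.Theory.
Local Open Scope ring_scope.

Lemma zev_cons (p : {poly int}) (c : int) x :
  zev (p * 'X + c%:P) x = zev p x * x + c%:~R.
Proof. by rewrite /zev rmorphD rmorphM /= map_polyX map_polyC hornerD hornerMX hornerC. Qed.

Lemma zev0 x : zev 0 x = 0.
Proof. by rewrite /zev rmorph0 horner0. Qed.

Lemma zevC c x : zev c%:P x = c%:~R.
Proof. by rewrite /zev map_polyC hornerC. Qed.

Lemma zevX x : zev 'X x = x.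
Proof. by rewrite /zev map_polyX hornerX. Qed.

Lemma zevD p q x : zev (p + q) x = zev p x + zev q x.
Proof. by rewrite /zev rmorphD hornerD. Qed.

Lemma zevN p x : zev (- p) x = - zev p x.
Proof. by rewrite /zev rmorphN hornerN. Qed.

Lemma zevB p q x : zev (p - q) x = zev p x - zev q x.
Proof. by rewrite zevD zevN. Qed.

Lemma zevM p q x : zev (p * q) x = zev p x * zev q x.
Proof. by rewrite /zev rmorphM hornerM. Qed.

Definition digit (c : int) : bool := c \in [:: -1; 0; 1].

Lemma pm1_cons p c : pm1_poly (p * 'X + c%:P) = digit c && pm1_poly p.
Proof.
rewrite /pm1_poly -cons_poly_def polyseq_cons.
case: (nilp p) /nilP => [->|_] /=; last by [].
rewrite polyseqC /=.
by case: (c =P 0) => [->|] //=; rewrite andbT.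
Qed.

Lemma pm1_0 : pm1_poly 0. Proof. by rewrite /pm1_poly polyseq0. Qed.

Lemma pm1C c : digit c -> pm1_poly c%:P.
Proof. move=> h; by rewrite -[c%:P]add0r -(mul0r 'X) pm1_cons h pm1_0. Qed.

Lemma digit_diff c d : digit c -> digit d -> c != d -> (d - c) \in [:: 1; 2; -1; -2].
Proof. by rewrite /digit !inE => /or3P[]/eqP-> /or3P[]/eqP->. Qed.

Section Uniq.
Variable X : algC.
Hypothesis HX0 : X != 0.
Hypothesis H : forall (w : {poly int}) (k : int), k \in [:: 1; 2; -1; -2] -> X * zev w X != k%:~R.

Lemma rep0 q : pm1_poly q -> zev q X = 0 -> q = 0.
Proof.
elim/poly_ind: q => [//|q d IH]; rewrite pm1_cons => /andP[hd hq].
rewrite zev_cons => e.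
have [d0|dn0] := eqVneq d 0.
  move: e; rewrite d0 addr0 => /eqP; rewrite mulf_eq0 (negbTE HX0) orbF => /eqP e.
  by rewrite (IH hq e) mul0r add0r.
have hk : (0 - d) \in [:: 1; 2; -1; -2] by apply: digit_diff; rewrite // eq_sym.
have := H q _ hk.
move/eqP: e; rewrite addr_eq0 => /eqP e.
by rewrite sub0r rmorphN /= -e mulrC eqxx.
Qed.

Lemma uniq_rep p q : pm1_poly p -> pm1_poly q -> zev p X = zev q X -> p = q.
Proof.
elim/poly_ind: p q => [|p c IH] q.
  by move=> _ hq e; apply/esym/rep0 => //; rewrite -e zev0.
rewrite pm1_cons => /andP[hc hp].
elim/poly_ind: q => [|q d _].
  by move=> _ e; apply: rep0; rewrite ?pm1_cons ?hc ?hp // e zev0.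
rewrite pm1_cons => /andP[hd hq]; rewrite !zev_cons => e.
have e2 : X * zev (p - q) X = (d - c)%:~R.
  rewrite zevB rmorphB /=; apply/eqP; rewrite -subr_eq0; apply/eqP.
  by rewrite -[RHS](subrr (zev p X * X + c%:~R)) {2}e; ring.
have [cd|cnd] := eqVneq c d.
  move: e2; rewrite cd subrr => /eqP; rewrite mulf_eq0 (negbTE HX0) /= zevB subr_eq0 => /eqP e3.
  by rewrite (IH q hp hq e3).
by have := H (p - q) _ (digit_diff _ _ hc hd cnd); rewrite e2 eqxx.
Qed.
End Uniq.

Section Exist.
Variables (X th : algC) (N : int -> int -> nat).
Hypothesis step : forall u v : int, ~~ ((v == 0) && digit u) ->
  exists a u' v', digit a /\ u%:~R + v%:~R * th = a%:~R + X * (u'%:~R + v'%:~R * th)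
     /\ (N u' v' < N u v)%N.

Lemma exist_rep u v : exists p, pm1_poly p /\ u%:~R + v%:~R * th = zev p X.
Proof.
suff: forall n u v, (N u v < n)%N -> exists p, pm1_poly p /\ u%:~R + v%:~R * th = zev p X.
  by move=> /(_ (N u v).+1 u v (ltnSn _)).
elim=> [//|n IH] {}u {}v hN.
case: (boolP ((v == 0) && digit u)) => [/andP[/eqP -> hu]|hn].
  by exists u%:P; rewrite pm1C // zevC mul0r addr0.
have [a [u' [v' [ha [e hl]]]]] := step _ _ hn.
have [p [hp ep]] := IH u' v' (leq_trans hl hN).
exists (p * 'X + a%:P); rewrite pm1_cons ha hp; split => //.
by rewrite zev_cons e ep mulrC addrC.
Qed.
End Exist.


Lemma lin_indep (x a b : algC) : x \isn't Num.real -> a \is Num.real -> b \is Num.real ->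
  a + b * x = 0 -> a = 0 /\ b = 0.
Proof.
move=> hx ha hb e.
have [b0|bn0] := eqVneq b 0.
  by move: e; rewrite b0 mul0r addr0.
exfalso; move/negP: hx; apply.
have ebx : b * x = - a by apply/eqP; rewrite -addr_eq0 addrC; exact/eqP.
have -> : x = - a / b by rewrite -ebx mulrC mulKf.
by rewrite rpredM ?rpredN ?rpredV.
Qed.

Lemma lin_indep_int (x : algC) (a b : int) : x \isn't Num.real ->
  a%:~R + b%:~R * x = 0 -> a = 0 /\ b = 0.
Proof.
move=> hx /(lin_indep _ _ _ hx (realz _ _) (realz _ _)) [/eqP ha /eqP hb].
by move: ha hb; rewrite !intr_eq0 => /eqP -> /eqP ->.
Qed.

Lemma zadj_lin (x : algC) (a b : int) (hx : x ^+ 2 = a%:~R * x + b%:~R) p :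
  exists u v : int, zev p x = u%:~R + v%:~R * x.
Proof.
elim/poly_ind: p => [|p c [u [v e]]].
  by exists 0, 0; rewrite zev0 mul0r addr0.
exists (v * b + c), (u + v * a); rewrite zev_cons e !rmorphD !rmorphM /=.
rewrite mulrDl -mulrA -expr2 hx; ring.
Qed.

Lemma nonreal_sqrt (k : int) : 0 < k -> sqrtC (- k%:~R : algC) \isn't Num.real.
Proof.
move=> hk; apply/negP => hr.
move: hr; rewrite realEsqr sqrtCK.
by rewrite oppr_ge0 lerz0; lia.
Qed.

Lemma nonreal_sqrtn (k : nat) : (0 < k)%N -> sqrtC (- k%:R : algC) \isn't Num.real.
Proof. move=> hk; have := nonreal_sqrt (k%:Z); rewrite ltz_nat; exact. Qed.

Lemma hn_conv (u v : int) : ~~ ((v == 0) && digit u) -> ~ (v = 0 /\ (u = -1 \/ u = 0 \/ u = 1)).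
Proof.
move=> h [hv hu]; move/negP: h; apply; rewrite hv eqxx /digit /=.
by case: hu => [->|[->|->]].
Qed.

Lemma digit_conv (a : int) : (a = -1 \/ a = 0 \/ a = 1) -> digit a.
Proof. by case=> [->|[->|->]]. Qed.

Lemma res3 (r : int) : exists k a : int, (a = -1 \/ a = 0 \/ a = 1) /\ r = 3 * k + a.
Proof.
exists ((r + 1) %/ 3)%Z, (r - 3 * ((r + 1) %/ 3)%Z); split; last by ring.
have n3 : (3:int) != 0 by []. have p3 : (0:int) < 3 by [].
have := divz_eq (r + 1) 3; have := modz_ge0 (r+1) n3; have := ltz_pmod (r + 1) p3; lia.
Qed.

Lemma cons_ge0 (x : int) : 0 <= x * (x + 1).
Proof. have [h|h] := lerP 0 x; nia. Qed.

Lemma mulr_sq (s y : algC) : s * (y * s) = y * s ^+ 2.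
Proof. by rewrite mulrC -mulrA -expr2. Qed.

Lemma part3 : Spm1_generator (Zadj (sqrtC (-3))) (sqrtC (-3)).
Proof.
set s := sqrtC (-3).
have hs : s ^+ 2 = -3 := sqrtCK _.
have hsr : s \isn't Num.real := nonreal_sqrtn 3 isT.
have hs0 : s != 0 by apply: contraNneq hsr => ->; exact: real0.
split; first by exists 'X; rewrite zevX.
move=> z [q ->].
have hs' : s ^+ 2 = 0%:~R * s + (-3)%:~R by rewrite hs mul0r add0r.
have [u [v ->]] := zadj_lin s 0 (-3) hs' q.
have step : forall u v : int, ~~ ((v == 0) && digit u) ->
  exists a u' v', digit a /\ u%:~R + v%:~R * s = a%:~R + s * (u'%:~R + v'%:~R * s)
     /\ (absz (u' * u' + 3 * (v' * v'))%R < absz (u * u + 3 * (v * v))%R)%N.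
  move=> {}u {}v /hn_conv hn.
  have [k [a [ha hu]]] := res3 u.
  exists a, v, (-k); split; first exact: digit_conv.
  split.
    rewrite hu !rmorphD !rmorphM !rmorphN /= mulrDr mulr_sq hs; ring.
  case: ha hu => ? ?; subst; nia.
have [p [hp ep]] := exist_rep s s _ step u v.
exists p; split => // p' [hp' ep'].
apply: (uniq_rep s hs0) => //; last by rewrite -ep -ep'.
move=> w k hk.
have [u1 [v1 ->]] := zadj_lin s 0 (-3) hs' w.
apply/eqP => e.
have : (- 3 * v1 - k)%:~R + u1%:~R * s = 0 :> algC.
  rewrite !rmorphD !rmorphM !rmorphN /= -e mulrDr mulr_sq hs; ring.
move/(lin_indep_int _ _ _ hsr) => [h1 h2].
by move: hk; rewrite !inE; lia.
Qed.


Lemma aint_of_intpoly (x : algC) (p : {poly int}) :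
  zev p x = 0 -> (lead_coef p = 1 \/ lead_coef p = -1) -> x \in Aint.
Proof.
move=> hx hl.
have hll : lead_coef p * lead_coef p = 1 by case: hl => ->.
set l := lead_coef p in hll *.
apply: (@root_monic_Aint (map_poly intr (l *: p))).
- by rewrite /root linearZ /= hornerZ -/(zev p x) hx mulr0.
- rewrite monicE lead_coef_map_inj; first by rewrite lead_coefZ hll.
    exact: intr_inj.
  by rewrite rmorph0.
- by apply/polyOverP => i; rewrite coef_map /= intr_int.
Qed.

Lemma rpoly_lin (s : algC) (c : rat) (hs : s ^+ 2 = ratr c) (p : {poly rat}) :
  exists u v : rat, (map_poly ratr p).[s] = ratr u + ratr v * s.
Proof.
elim/poly_ind: p => [|p d [u [v e]]].
  by exists 0, 0; rewrite rmorph0 horner0 !rmorph0 mul0r addr0.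
exists (v * c + d), u; rewrite rmorphD rmorphM /= map_polyX map_polyC hornerD hornerMX hornerC e.
rewrite !rmorphD !rmorphM /=.
transitivity (ratr u * s + ratr v * s ^+ 2 + ratr d); first ring.
rewrite hs; ring.
Qed.

Lemma qadj_lin (s : algC) (c : rat) (hs : s ^+ 2 = ratr c) (hsr : s \isn't Num.real) z :
  Qadj s z -> exists u v : rat, z = ratr u + ratr v * s.
Proof.
move=> [P [Q [hQ ->]]].
have [u1 [v1 ->]] := rpoly_lin s c hs P.
have [u2 [v2 e2]] := rpoly_lin s c hs Q.
rewrite e2 in hQ *.
set D := u2 * u2 - c * (v2 * v2).
have hD : ratr D != 0 :> algC.
  apply/eqP => hD0.
  have e3 : (ratr u2 + ratr v2 * s) * (ratr u2 - ratr v2 * s) = ratr D.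
    rewrite /D !rmorphB !rmorphM /= -hs; ring.
  move: e3; rewrite hD0 => /eqP; rewrite mulf_eq0 (negbTE hQ) /= => /eqP e4.
  have : ratr u2 + ratr (- v2) * s = 0 by rewrite rmorphN mulNr.
  move/(lin_indep _ _ _ hsr (Creal_Crat (Crat_rat _)) (Creal_Crat (Crat_rat _))) => [].
  move/eqP; rewrite fmorph_eq0 => /eqP hu; move/eqP; rewrite fmorph_eq0 oppr_eq0 => /eqP hv.
  by move/eqP: hQ; apply; rewrite hu hv !rmorph0 mul0r addr0.
set A := u1 * u2 - c * v1 * v2.
set B := v1 * u2 - u1 * v2.
exists (A / D), (B / D).
apply/(mulIf hQ); rewrite mulfVK //.
have key : (ratr A + ratr B * s) * (ratr u2 + ratr v2 * s) = (ratr u1 + ratr v1 * s) * ratr D.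
  apply/eqP; rewrite -subr_eq0; apply/eqP.
  rewrite /A /B /D !rmorphB !rmorphM /=.
  transitivity ((ratr v1 * ratr u2 - ratr u1 * ratr v2) * ratr v2 * (s ^+ 2 - ratr c)); first ring.
  by rewrite hs subrr mulr0.
have -> : (ratr (A / D) + ratr (B / D) * s) * (ratr u2 + ratr v2 * s)
   = (ratr A + ratr B * s) * (ratr u2 + ratr v2 * s) / ratr D.
  rewrite !fmorph_div /=; field; exact: hD.
by rewrite key mulfK.
Qed.

Lemma conj_sqrt (s : algC) (c : rat) : s ^+ 2 = ratr c -> s \isn't Num.real -> s^* = - s.
Proof.
move=> hs hsr.
have hc : s^* ^+ 2 = ratr c by rewrite -rmorphXn hs; exact: conj_Crat (Crat_rat c).
have : (s^* - s) * (s^* + s) = 0.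
  transitivity (s^* ^+ 2 - s ^+ 2); first ring.
  by rewrite hc hs subrr.
move/eqP; rewrite mulf_eq0 subr_eq0 => /orP[hr|]; last by rewrite addr_eq0 => /eqP.
by move: hsr; rewrite CrealE hr.
Qed.

Lemma aint_coords (k : nat) (hk : prime k) (s : algC) (hs : s ^+ 2 = - k%:R)
  (hsr : s \isn't Num.real) (u v : rat) :
  ratr u + ratr v * s \in Aint ->
  exists A V M : int, 2 * (ratr u + ratr v * s) = A%:~R + V%:~R * s /\
     A * A + k%:Z * (V * V) = 4 * M.
Proof.
set z := ratr u + ratr v * s => hz.
have hs' : s ^+ 2 = ratr (- k%:R) by rewrite rmorphN rmorph_nat.
have hsc := conj_sqrt s _ hs' hsr.
have hzc : z^* = ratr u - ratr v * s.
  have cu : (ratr u)^* = ratr u :> algC by exact: conj_Crat (Crat_rat u).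
  have cv : (ratr v)^* = ratr v :> algC by exact: conj_Crat (Crat_rat v).
  have -> : z^* = (ratr u)^* + (ratr v)^* * s^* by rewrite /z rmorphD (rmorphM _ (ratr v) s).
  by rewrite cu cv hsc mulrN.
have hzcA : z^* \in Aint by rewrite Aint_aut.
have hA : (ratr (2 * u) : algC) \in Num.int.
  apply: Cint_rat_Aint; first exact: Crat_rat.
  have -> : (ratr (2 * u) : algC) = z + z^* by rewrite hzc (rmorphM _ 2 u) /= rmorph_nat /z; ring.
  exact: rpredD.
have hM : (ratr (u * u + k%:R * (v * v)) : algC) \in Num.int.
  apply: Cint_rat_Aint; first exact: Crat_rat.
  have -> : (ratr (u * u + k%:R * (v * v)) : algC) = z * z^*.
    rewrite hzc /z rmorphD (rmorphM _ u u) (rmorphM _ k%:R) (rmorphM _ v v) /= rmorph_nat.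
    apply/eqP; rewrite -subr_eq0; apply/eqP.
    transitivity (ratr v * ratr v * (s ^+ 2 + k%:R)); first ring.
    by rewrite hs addNr mulr0.
  exact: rpredM.
have [A eA] := intrP hA.
have [M eM] := intrP hM.
set y := ratr (2 * k%:R * v) : algC.
have hy : y ^+ 2 = (k%:Z * (4 * M - A * A))%:~R.
  rewrite !rmorphM !rmorphB !rmorphM /= -eA -eM /y !rmorphM !rmorphD !rmorphM /=.
  rewrite !rmorph_nat /=; ring.
have hyA : y \in Aint.
  apply: (aint_of_intpoly y ('X^2 - (k%:Z * (4 * M - A * A))%:P)).
    by rewrite zevB zevC /zev map_polyXn hornerXn hy subrr.
  by left; rewrite lead_coefXnsubC.
have [Y eY] := intrP (Cint_rat_Aint (Crat_rat _) hyA).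
have hYY : Y * Y = k%:Z * (4 * M - A * A).
  by apply: (@intr_inj algC); rewrite rmorphM /= -eY -expr2 hy.
have hkY : (k%:Z %| Y)%Z.
  have : (k%:Z %| Y * Y)%Z by rewrite hYY dvdz_mulr.
  by rewrite !dvdzE abszM Euclid_dvdM // orbb.
have hk0 : k%:Z != 0 by rewrite eqz_nat -lt0n prime_gt0.
have hk0' : (k%:R : algC) != 0 by rewrite pnatr_eq0 -lt0n prime_gt0.
set V := (Y %/ k%:Z)%Z.
have eV : Y = V * k%:Z by rewrite divzK.
exists A, V, M; split.
  have e2v : (ratr (2 * v) : algC) = V%:~R.
    apply: (mulIf hk0').
    have -> : V%:~R * (k%:R : algC) = Y%:~R by rewrite eV rmorphM.
    rewrite -eY /y (rmorphM _ (2 * k%:R) v) (rmorphM _ 2 k%:R) (rmorphM _ 2 v) !rmorph_nat; ring.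
  by rewrite -e2v /z -eA !rmorphM /= rmorph_nat; ring.
apply/eqP; rewrite -subr_eq0 -(mulrI_eq0 _ (lregP hk0)).
apply/eqP; move: hYY; rewrite eV => hYY.
transitivity (V * k%:Z * (V * k%:Z) - k%:Z * (4 * M - A * A)); first ring.
by rewrite hYY subrr.
Qed.


Lemma split2 (A : int) : exists a r : int, A = 2 * a + r /\ (r = 0 \/ r = 1).
Proof.
exists (A %/ 2)%Z, (A %% 2)%Z.
have n2 : (2:int) != 0 by []. have p2 : (0:int) < 2 by [].
have := divz_eq A 2; have := modz_ge0 A n2; have := ltz_pmod A p2; lia.
Qed.

Lemma sqrt_aint (k : nat) : sqrtC (- k%:R : algC) \in Aint.
Proof.
apply: (aint_of_intpoly _ ('X^2 + (k%:Z)%:P)).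
  by rewrite zevD zevC /zev map_polyXn hornerXn sqrtCK addNr.
by left; rewrite lead_coefXnaddC.
Qed.

Lemma zadj_coords (s : algC) (u v : int) : Zadj s (u%:~R + v%:~R * s).
Proof. by exists (u%:P + v%:P * 'X); rewrite zevD zevM !zevC zevX. Qed.

Lemma qadj_coords (s : algC) (u v : rat) : Qadj s (ratr u + ratr v * s).
Proof.
exists (u%:P + v%:P * 'X), 1; split.
  by rewrite rmorph1 hornerC oner_neq0.
by rewrite rmorph1 hornerC divr1 rmorphD rmorphM /= !map_polyC map_polyX hornerD hornerM !hornerC hornerX.
Qed.

Lemma qadj_coords_int (s : algC) (u v : int) : Qadj s (u%:~R + v%:~R * s).
Proof. by have := qadj_coords s u%:~R v%:~R; rewrite !ratr_int. Qed.

Section Part2.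
Let s := sqrtC (-2) : algC.
Let hs : s ^+ 2 = -2 := sqrtCK _.
Let hsr : s \isn't Num.real := nonreal_sqrtn 2 isT.
Let hs' : s ^+ 2 = 0%:~R * s + (-2)%:~R.
Proof. by rewrite hs mul0r add0r. Qed.

Lemma part2b z : Zadj s z <-> ring_of_integers s z.
Proof.
split.
  move=> [p ->]; have [u [v ->]] := zadj_lin s 0 (-2) hs' p.
  split; first exact: qadj_coords_int.
  by rewrite rpredD ?rpredM ?Aint_int //; apply: sqrt_aint 2.
move=> [hq hA].
have hsq : s ^+ 2 = ratr (-2) by rewrite hs rmorphN rmorph_nat.
have [u [v ez]] := qadj_lin s _ hsq hsr z hq.
rewrite ez in hA.
have [A [V [M [e2 eM]]]] := aint_coords 2 isT s hs hsr u v hA.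
have [a [r [ha hr]]] := split2 A.
have [b [t [hb ht]]] := split2 V.
have r0 : r = 0 by case: hr => // ?; subst; lia.
have t0 : t = 0 by case: ht => // ?; subst; lia.
subst r t.
have -> : z = a%:~R + b%:~R * s.
  apply: (@mulfI _ 2); first by rewrite pnatr_eq0.
  rewrite ez e2 ha hb !addr0 !rmorphM /=; ring.
exact: zadj_coords.
Qed.

Lemma part2a : Spm1_generator (Zadj s) (1 + s).
Proof.
have hX0 : 1 + s != 0.
  apply: contraNneq hsr => e; have -> : s = -1 by apply/eqP; rewrite -addr_eq0 addrC e.
  by rewrite realN real1.
split; first by exists (1 + 'X); rewrite zevD zevC zevX.
move=> z [q ->].
have [u [v ->]] := zadj_lin s 0 (-2) hs' q.
have step : forall u v : int, ~~ ((v == 0) && digit u) ->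
  exists a u' v', digit a /\ u%:~R + v%:~R * s = a%:~R + (1 + s) * (u'%:~R + v'%:~R * s)
     /\ (absz (u' * u' + 2 * (v' * v'))%R < absz (u * u + 2 * (v * v))%R)%N.
  move=> {}u {}v /hn_conv hn.
  have [k [a [ha hu]]] := res3 (u - v).
  exists a, (k + v), (-k); split; first exact: digit_conv.
  have hu' : u = 3 * k + a + v by rewrite -hu; ring.
  split.
    rewrite hu' !rmorphD !rmorphM !rmorphN /=.
    apply/eqP; rewrite -subr_eq0; apply/eqP.
    transitivity ((k%:~R) * (s ^+ 2 + 2)); first ring.
    by rewrite hs addNr mulr0.
  have h1 := cons_ge0 k. have h2 := cons_ge0 (k + v). have h3 := cons_ge0 (-k). have h4 := cons_ge0 (-(k+v)).
  case: ha hu => ? ?; subst; nia.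
have [p [hp ep]] := exist_rep (1 + s) s _ step u v.
exists p; split => // p' [hp' ep'].
apply: (uniq_rep (1 + s) hX0) => //; last by rewrite -ep -ep'.
move=> w k hk.
have hX2 : (1 + s) ^+ 2 = 2%:~R * (1 + s) + (-3)%:~R.
  apply/eqP; rewrite -subr_eq0; apply/eqP.
  transitivity (s ^+ 2 + 2); first by rewrite !rmorphN /=; ring.
  by rewrite hs addNr.
have hXr : 1 + s \isn't Num.real.
  by apply: contraNN hsr => h; rewrite -[s](addKr 1) rpredD // rpredN real1.
have [u1 [v1 ->]] := zadj_lin (1 + s) 2 (-3) hX2 w.
apply/eqP => e.
have : (- 3 * v1 - k)%:~R + (u1 + 2 * v1)%:~R * (1 + s) = 0 :> algC.
  rewrite !rmorphD !rmorphM !rmorphN /= -e mulrDr mulr_sq hX2 !rmorphN /=; ring.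
move/(lin_indep_int _ _ _ hXr) => [h1 h2].
by move: hk; rewrite !inE; lia.
Qed.
End Part2.

Section Part4.
Let s := sqrtC (-11) : algC.
Let hs : s ^+ 2 = -11 := sqrtCK _.
Let hsr : s \isn't Num.real := nonreal_sqrtn 11 isT.
Let w := (1 + s) / 2.
Let hw2 : w ^+ 2 = 1%:~R * w + (-3)%:~R.
Proof.
rewrite /w; apply/eqP; rewrite -subr_eq0; apply/eqP.
transitivity ((s ^+ 2 + 11) / 4); first by rewrite !rmorphN /=; field.
by rewrite hs addNr mul0r.
Qed.
Let hwr : w \isn't Num.real.
Proof.
apply: contraNN hsr => h.
have -> : s = 2 * w - 1 by rewrite /w; field.
by apply: rpredB; [apply: rpredM; [exact: realn | exact: h] | exact: real1].
Qed.
Let hw0 : w != 0.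
Proof. by apply: contraNneq hwr => ->; exact: real0. Qed.

Lemma roi_coords z : ring_of_integers s z -> exists u v : int, z = u%:~R + v%:~R * w.
Proof.
move=> [hq hA].
have hsq : s ^+ 2 = ratr (-11) by rewrite hs rmorphN rmorph_nat.
have [u [v ez]] := qadj_lin s _ hsq hsr z hq.
rewrite ez in hA.
have [A [V [M [e2 eM]]]] := aint_coords 11 isT s hs hsr u v hA.
have [c [r [hc hr]]] := split2 (A - V).
have r0 : r = 0.
  case: hr => // ?; subst r.
  have hA' : A = V + 2 * c + 1 by lia.
  subst A; lia.
subst r.
exists c, V.
apply: (@mulfI _ 2); first by rewrite pnatr_eq0.
have hA' : A = 2 * c + V by lia.
by rewrite ez e2 hA' /w !rmorphD !rmorphM /=; field.
Qed.

Lemma part4 : Spm1_generator (ring_of_integers s) w.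
Proof.
split.
  split.
    have -> : w = ratr (1/2) + ratr (1/2) * s.
      by rewrite /w fmorph_div /= rmorph1 rmorph_nat mulrDl !mul1r [s / 2]mulrC.
    exact: qadj_coords.
  apply: (aint_of_intpoly _ (('X - 1%:P) * 'X + 3%:P)).
    rewrite zevD zevM zevB zevX !zevC.
    apply/eqP; rewrite -subr_eq0; apply/eqP.
    transitivity (w ^+ 2 - 1%:~R * w - (-3)%:~R); first by rewrite !rmorphN /=; ring.
    by rewrite hw2; ring.
  left; rewrite lead_coefDl.
    by rewrite lead_coefMX lead_coefXsubC.
  rewrite size_mulX ?polyXsubC_eq0 // size_XsubC.
  exact: leq_ltn_trans (size_polyC_leq1 _) _.
move=> z /roi_coords [u [v ->]].
have step : forall u v : int, ~~ ((v == 0) && digit u) ->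
  exists a u' v', digit a /\ u%:~R + v%:~R * w = a%:~R + w * (u'%:~R + v'%:~R * w)
     /\ (absz (u' * u' + u' * v' + 3 * (v' * v'))%R < absz (u * u + u * v + 3 * (v * v))%R)%N.
  move=> {}u {}v /hn_conv hn.
  have [k [a [ha hu]]] := res3 u.
  exists a, (k + v), (-k); split; first exact: digit_conv.
  split.
    rewrite hu !rmorphD !rmorphM !rmorphN /= mulrDr mulr_sq hw2 !rmorphN /=; ring.
  have h1 := cons_ge0 k. have h2 := cons_ge0 (k + v). have h3 := cons_ge0 (-k). have h4 := cons_ge0 (-(k+v)).
  case: ha hu => ? ?; subst; nia.
have [p [hp ep]] := exist_rep w w _ step u v.
exists p; split => // p' [hp' ep'].
apply: (uniq_rep w hw0) => //; last by rewrite -ep -ep'.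
move=> q k hk.
have [u1 [v1 ->]] := zadj_lin w 1 (-3) hw2 q.
apply/eqP => e.
have : (- 3 * v1 - k)%:~R + (u1 + v1)%:~R * w = 0 :> algC.
  rewrite !rmorphD !rmorphM !rmorphN /= -e mulrDr mulr_sq hw2 !rmorphN /=; ring.
move/(lin_indep_int _ _ _ hwr) => [h1 h2].
by move: hk; rewrite !inE; lia.
Qed.
End Part4.


Lemma eval_lin (y : algC) (c0 c1 : rat) :
  (map_poly ratr (c0%:P + c1%:P * 'X)).[y] = ratr c0 + ratr c1 * y.
Proof.
by rewrite rmorphD rmorphM /= !map_polyC map_polyX hornerD hornerM !hornerC hornerX.
Qed.

Lemma qadj_transfer (x y : algC) (c0 c1 : rat) z :
  x = ratr c0 + ratr c1 * y -> Qadj x z -> Qadj y z.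
Proof.
move=> hx [P [Q [hQ ->]]].
set r := c0%:P + c1%:P * 'X.
have hr : x = (map_poly ratr r).[y] by rewrite eval_lin.
exists (P \Po r), (Q \Po r).
by rewrite !map_comp_poly !horner_comp -hr.
Qed.

Lemma same_field_aff (x y : algC) (c0 c1 d0 d1 : rat) :
  x = ratr c0 + ratr c1 * y -> y = ratr d0 + ratr d1 * x -> same_field x y.
Proof.
move=> h1 h2 z; split; [exact: qadj_transfer h1 | exact: qadj_transfer h2].
Qed.

Lemma field_of_lin (X s : algC) (a m : rat) : m != 0 ->
  2 * X + ratr a = ratr m * s -> same_field X s.
Proof.
move=> hm e.
have hm' : (ratr m : algC) != 0 by rewrite fmorph_eq0.
apply: (same_field_aff _ _ (- a / 2) (m / 2) (a / m) (2 / m)).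
  have hX : X = (ratr m * s - ratr a) / 2 by rewrite -e; field.
  by rewrite hX !fmorph_div /= rmorphN rmorph_nat; field.
have hs : s = (2 * X + ratr a) / ratr m by rewrite e; field.
by rewrite hs !fmorph_div /= rmorph_nat; field.
Qed.

Lemma field_of_sq (X s : algC) (a m : rat) : m != 0 ->
  (2 * X + ratr a) ^+ 2 = (ratr m * s) ^+ 2 -> same_field X s.
Proof.
move=> hm e.
have : (2 * X + ratr a - ratr m * s) * (2 * X + ratr a + ratr m * s) = 0.
  by apply/eqP; rewrite -subr_sqr e subrr.
move/eqP; rewrite mulf_eq0 => /orP[|] /eqP h.
  apply: (field_of_lin _ _ a m hm); apply/eqP; rewrite -subr_eq0; exact/eqP.
apply: (field_of_lin _ _ a (- m)); first by rewrite oppr_eq0.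
by rewrite rmorphN mulNr; apply/eqP; rewrite -subr_eq0 opprK; exact/eqP.
Qed.

Lemma part1 X : imag_quadratic X -> Spm1_generator (Zadj X) X ->
  same_field X (sqrtC (-2)) \/ same_field X (sqrtC (-3)) \/ same_field X (sqrtC (-11)).
Proof.
move=> [hXr [a [b hab]]] [hZX hgen].
have hX0 : X != 0 by apply: contraNneq hXr => ->; exact: real0.
have Zint : forall c : int, Zadj X c%:~R by move=> c; exists c%:P; rewrite zevC.
have decomp : forall z, Zadj X z -> exists c w, digit c /\ Zadj X w /\ z = c%:~R + X * w.
  move=> z hz; have [p [[hp ->] _]] := hgen z hz.
  elim/poly_ind: p hp => [|p c _] hp.
    exists 0, 0; split; first by [].
    split; first by exists 0; rewrite zev0.
    by rewrite zev0 mulr0 addr0.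
  move: hp; rewrite pm1_cons => /andP[hc hp]; exists c, (zev p X); split=> //; split; first by exists p.
  by rewrite zev_cons addrC mulrC.
have notin : forall w c, Zadj X w -> digit c -> c != 1 -> c%:~R + X * w != 1.
  move=> w c hw hc hc1; apply/eqP => e.
  have [q [[hq eq] _]] := hgen w hw.
  have [p [_ hu]] := hgen 1 (Zint 1).
  have e1' : p = q * 'X + c%:P.
    apply: hu; split; first by rewrite pm1_cons hc hq.
    by rewrite zev_cons -eq [w * X]mulrC addrC e.
  have e2 : p = 1%:P by apply: hu; split; [exact: pm1C | rewrite zevC].
  have : (q * 'X + c%:P)`_0 = (1%:P : {poly int})`_0 by rewrite -e1' -e2.
  rewrite coefD coefMX coefC /= add0r coefC /= => hc1'.
  by move/eqP: hc1; apply.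
have [w3 [hw3 e3]] : exists w, Zadj X w /\ X * w = (3:int)%:~R.
  have [c [w [hc [hw e]]]] := decomp _ (Zint 2).
  move: hc; rewrite /digit !inE => /or3P[]/eqP hc; subst c.
  - exists w; split=> //.
    have -> : X * w = 2%:~R - (-1)%:~R by rewrite e; ring.
    by rewrite -rmorphB.
  - exfalso; move/eqP: (notin w (-1) hw isT isT); apply.
    have -> : X * w = 2%:~R by rewrite e; ring.
    by rewrite -rmorphD.
  - exfalso; move/eqP: (notin w 0 hw isT isT); apply.
    have -> : X * w = 2%:~R - 1%:~R by rewrite e; ring.
    by rewrite add0r -rmorphB.
have hXA : X \in Aint.
  have [p [[hp e2] _]] := hgen _ (Zint 2).
  case: (leqP (size p) 1) => hs.
    move: hp e2; rewrite (size1_polyC hs) zevC => hp /intr_inj e2.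
    by move: hp; rewrite -e2 /pm1_poly polyseqC.
  apply: (aint_of_intpoly X (p - 2%:P)).
    by rewrite zevB zevC -e2 subrr.
  have hp0 : p != 0 by rewrite -size_poly_gt0; apply: ltn_trans hs.
  rewrite lead_coefDl; last first.
    by rewrite size_opp; apply: leq_ltn_trans (size_polyC_leq1 _) hs.
  have hl : lead_coef p \in (p : seq int).
    by rewrite lead_coefE mem_nth // ltn_predL size_poly_gt0.
  move: hp0; rewrite -lead_coef_eq0.
  have := allP hp _ hl; rewrite /= !inE.
  by case/or3P => /eqP -> //; [right | left].
set Y := X^*.
have ca : (ratr a)^* = ratr a :> algC by exact: conj_Crat (Crat_rat a).
have cb : (ratr b)^* = ratr b :> algC by exact: conj_Crat (Crat_rat b).
have hY : Y ^+ 2 + ratr a * Y + ratr b = 0.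
  have e : (X ^+ 2 + ratr a * X + ratr b)^* = Y ^+ 2 + (ratr a)^* * Y + (ratr b)^*.
    by rewrite /Y rmorphD rmorphD (rmorphM _ (ratr a) X) rmorphXn.
  by rewrite -{1}ca -{1}cb -e hab rmorph0.
have hYX : Y != X by move: hXr; rewrite CrealE.
have hsum : X + Y = - ratr a.
  have : (X - Y) * (X + Y + ratr a) = 0.
    transitivity ((X ^+ 2 + ratr a * X + ratr b) - (Y ^+ 2 + ratr a * Y + ratr b)); first ring.
    by rewrite hab hY subrr.
  move/eqP; rewrite mulf_eq0 subr_eq0 eq_sym (negbTE hYX) /= addrC addr_eq0 => /eqP.
  by move=> ->; rewrite opprK.
have hprod : X * Y = ratr b.
  have -> : Y = - ratr a - X by rewrite -hsum; ring.
  apply/eqP; rewrite -subr_eq0; apply/eqP; rewrite -[RHS]oppr0 -hab; ring.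
have hYA : Y \in Aint by rewrite Aint_aut.
have [a' ea] : exists a' : int, ratr a = a'%:~R :> algC.
  apply/intrP; apply: Cint_rat_Aint; first exact: Crat_rat.
  by rewrite -[ratr a]opprK -hsum rpredN rpredD.
have [b' eb] : exists b' : int, ratr b = b'%:~R :> algC.
  apply/intrP; apply: Cint_rat_Aint; first exact: Crat_rat.
  by rewrite -hprod rpredM.
have hX2 : X ^+ 2 = (- a')%:~R * X + (- b')%:~R.
  apply/eqP; rewrite -subr_eq0; apply/eqP; rewrite -[RHS]hab ea eb !rmorphN /=; ring.
have hb0 : 0 < b'.
  rewrite -(ltr0z algC) -eb -hprod /Y -normCK exprn_gt0 // normr_gt0 //.
have hb3 : b' = 3.
  have [q eq] := hw3.
  have [u [v ew]] := zadj_lin X _ _ hX2 q.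
  have : (- v * b' - 3)%:~R + (u - v * a')%:~R * X = 0 :> algC.
    rewrite !rmorphB !rmorphM !rmorphN /=.
    have <- : X * w3 - (3:int)%:~R = 0 by rewrite e3 subrr.
    rewrite eq ew mulrDr mulr_sq hX2 !rmorphN /=; ring.
  move/(lin_indep_int _ _ _ hXr) => [h1 h2].
  have hv : 0 < - v.
    case: (ltrP 0 (- v)) => // hv; exfalso.
    have : b' * (- v) <= 0 by apply: mulr_ge0_le0; lia.
    lia.
  have hb3 : b' <= 3.
    have : 0 <= b' * (- v - 1) by apply: mulr_ge0; lia.
    nia.
  have [hb1|hb1] := eqVneq b' 1; last first.
    have : b' = 2 \/ b' = 3 by lia.
    by case=> hb; subst b'; lia.
  exfalso; subst b'.
  have hw : Zadj X (- X - a'%:~R) by exists (- 'X - a'%:P); rewrite zevB zevN zevX zevC.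
  move/eqP: (notin _ 0 hw isT isT); apply.
  rewrite add0r; apply/eqP; rewrite -subr_eq0; apply/eqP.
  transitivity (- (X ^+ 2 - (- a')%:~R * X - (- 1)%:~R)); first by rewrite !rmorphN /=; ring.
  by rewrite hX2; ring.
subst b'.
have hsq : (2 * X + a'%:~R) ^+ 2 = (a' * a' - 12)%:~R.
  rewrite rmorphB rmorphM /=.
  transitivity (4 * X ^+ 2 + 4 * a'%:~R * X + a'%:~R * a'%:~R); first ring.
  by rewrite hX2 !rmorphN /=; ring.
have ha : a' * a' < 12.
  rewrite ltNge; apply/negP => h12.
  set r := sqrtC ((a' * a' - 12)%:~R : algC).
  have hr : r \is Num.real by apply: sqrtC_real; rewrite ler0z; lia.
  have : (2 * X + a'%:~R - r) * (2 * X + a'%:~R + r) = 0.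
    by apply/eqP; rewrite -subr_sqr hsq sqrtCK subrr.
  move/eqP; rewrite mulf_eq0 => /orP[] /eqP h; move/negP: hXr; apply.
    have e : 2 * X + a'%:~R = r by apply/eqP; rewrite -subr_eq0 h.
    have -> : X = (r - a'%:~R) / 2 by rewrite -e; field.
    by rewrite rpredM ?rpredV ?rpredB ?realz ?realn.
  have e : 2 * X + a'%:~R = - r by apply/eqP; rewrite -subr_eq0 opprK h.
  have -> : X = (- r - a'%:~R) / 2 by rewrite -e; field.
  by rewrite rpredM ?rpredV ?rpredB ?rpredN ?realz ?realn.
have : a' = -3 \/ a' = -2 \/ a' = -1 \/ a' = 0 \/ a' = 1 \/ a' = 2 \/ a' = 3 by nia.
have fs : forall (k : nat) (m : rat), m != 0 ->
    (a' * a' - 12)%:~R = (ratr m : algC) ^+ 2 * - k%:R -> same_field X (sqrtC (- k%:R)).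
  move=> k m hm e; apply: (field_of_sq X _ (a'%:~R : rat) m hm).
  by rewrite ratr_int hsq exprMn sqrtCK e.
case=> [|[|[|[|[|[|]]]]]] ?; subst a'.
- by right; left; apply: (fs 3 1) => //; rewrite rmorph1 /=; ring.
- by left; apply: (fs 2 2) => //; rewrite rmorph_nat /=; ring.
- by right; right; apply: (fs 11 1) => //; rewrite rmorph1 /=; ring.
- by right; left; apply: (fs 3 2) => //; rewrite rmorph_nat /=; ring.
- by right; right; apply: (fs 11 1) => //; rewrite rmorph1 /=; ring.
- by left; apply: (fs 2 2) => //; rewrite rmorph_nat /=; ring.
- by right; left; apply: (fs 3 1) => //; rewrite rmorph1 /=; ring.
Qed.

Theorem proposition6p5 :
  (forall X : algC, imag_quadratic X -> Spm1_generator (Zadj X) X ->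
     same_field X (sqrtC (-2)) \/ same_field X (sqrtC (-3)) \/
     same_field X (sqrtC (-11)))
  /\ (Spm1_generator (Zadj (sqrtC (-2))) (1 + sqrtC (-2))
      /\ (forall z, Zadj (sqrtC (-2)) z <-> ring_of_integers (sqrtC (-2)) z))
  /\ Spm1_generator (Zadj (sqrtC (-3))) (sqrtC (-3))
  /\ Spm1_generator (ring_of_integers (sqrtC (-11))) ((1 + sqrtC (-11)) / 2).
Proof.
split; first exact: part1.
split; first by split; [exact: part2a | exact: part2b].
split; [exact: part3 | exact: part4].
Qed.
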